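(* Consider MPI ranks that invoke collective communication through a wrapper which first calls a trivial barrier (MPI\_Barrier() over the participating ranks) and then makes the original MPI collective communication call. For a given invocation of such a wrapper, at any moment one of the following four cases holds: (a) some MPI rank is in the collective communication call, and all other ranks are either in the call or have exited it; (b) some MPI rank is in the collective communication call, no rank has exited it, and every other rank has at least entered the trivial barrier (and possibly proceeded further); (c) some MPI rank is in the trivial barrier and no other rank has exited it (though some may not yet have entered the trivial barrier); (d) either no MPI rank has entered the trivial barrier, or all MPI ranks have exited the MPI collective communication call.
   Context: Events are ordered by Lamport's happens-before relation. Barrier axiom (assumed, applied to the trivial barrier and to the collective call viewed as a synchronization among all participants): for a given invocation of an MPI barrier, it never happens that a rank A exits the barrier before (under happens-before) another participating rank B enters that barrier. *)

(* Defs.v *)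
Set Implicit Arguments.

(* The events of one rank during one invocation of the wrapper.
   ExitBarrier  r : rank r exits the trivial barrier; the wrapper then
                    immediately makes the collective call, so this event is
                    also rank r's entry into the collective call. *)
Inductive event (Rank : Type) : Type :=
| EnterBarrier (r : Rank)
| ExitBarrier (r : Rank)
| ExitColl (r : Rank).

Arguments EnterBarrier {Rank} r.
Arguments ExitBarrier {Rank} r.
Arguments ExitColl {Rank} r.

(* Lamport's happens-before relation: a strict partial order on events which
   contains the program order of each rank. *)
Definition happens_before_order (Rank : Type) (hb : event Rank -> event Rank -> Prop) : Prop :=
  (forall e, ~ hb e e) /\
  (forall e1 e2 e3, hb e1 e2 -> hb e2 e3 -> hb e1 e3) /\
  (forall r, hb (EnterBarrier r) (ExitBarrier r)) /\
  (forall r, hb (ExitBarrier r) (ExitColl r)).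

(* A moment: a consistent cut, i.e. the set of events that have occurred,
   downward closed under happens-before. *)
Definition moment (Rank : Type) (hb : event Rank -> event Rank -> Prop)
  (C : event Rank -> Prop) : Prop :=
  forall e1 e2, hb e1 e2 -> C e2 -> C e1.

Definition barrier_axiom_trivial (Rank : Type) (hb : event Rank -> event Rank -> Prop) : Prop :=
  forall C, moment hb C ->
  forall A B, ~ (C (ExitBarrier A) /\ ~ C (EnterBarrier B)).

(* Barrier axiom applied to the collective call (entry = ExitBarrier). *)
Definition barrier_axiom_coll (Rank : Type) (hb : event Rank -> event Rank -> Prop) : Prop :=
  forall C, moment hb C ->
  forall A B, ~ (C (ExitColl A) /\ ~ C (ExitBarrier B)).

Definition in_barrier (Rank : Type) (C : event Rank -> Prop) (r : Rank) : Prop :=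
  C (EnterBarrier r) /\ ~ C (ExitBarrier r).
Definition in_coll (Rank : Type) (C : event Rank -> Prop) (r : Rank) : Prop :=
  C (ExitBarrier r) /\ ~ C (ExitColl r).
Definition exited_coll (Rank : Type) (C : event Rank -> Prop) (r : Rank) : Prop :=
  C (ExitColl r).

(* Main.v *)
Require Import Defs.
From Stdlib Require Import Classical.

Theorem lemma2 (Rank : Type) (hb : event Rank -> event Rank -> Prop)
  (Hhb : happens_before_order hb)
  (Hbar : barrier_axiom_trivial hb)
  (Hcoll : barrier_axiom_coll hb)
  (C : event Rank -> Prop) (HC : moment hb C) :
  (* (a) *)
  (exists r, in_coll C r /\
     forall s, s <> r -> in_coll C s \/ exited_coll C s)
  \/
  (* (b) *)
  (exists r, in_coll C r /\ (forall s, ~ C (ExitColl s)) /\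
     forall s, s <> r -> C (EnterBarrier s))
  \/
  (* (c) *)
  (exists r, in_barrier C r /\ forall s, s <> r -> ~ C (ExitBarrier s))
  \/
  (* (d) *)
  ((forall s, ~ C (EnterBarrier s)) \/ (forall s, C (ExitColl s))).
Proof.
  unfold in_coll, exited_coll, in_barrier.
  destruct (classic (exists a, C (ExitColl a))) as [[a Ha]|Hna].
  - assert (HB : forall s, C (ExitBarrier s)).
    { intro s. apply NNPP. intro Hs. exact (Hcoll C HC a s (conj Ha Hs)). }
    destruct (classic (forall s, C (ExitColl s))) as [Hall|Hn].
    + right; right; right; right; exact Hall.
    + apply not_all_ex_not in Hn. destruct Hn as [r Hr].
      left. exists r. split; [split; auto|].
      intros s _. destruct (classic (C (ExitColl s))); [right|left]; auto.
  - assert (Hne : forall s, ~ C (ExitColl s)) by (intros s Hs; apply Hna; eauto).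
    destruct (classic (exists r, C (ExitBarrier r))) as [[r Hr]|Hnb].
    + right; left. exists r. split; [split; auto|]. split; auto.
      intros s _. apply NNPP. intro Hs. exact (Hbar C HC r s (conj Hr Hs)).
    + assert (Hnb' : forall s, ~ C (ExitBarrier s)) by (intros s Hs; apply Hnb; eauto).
      destruct (classic (exists r, C (EnterBarrier r))) as [[r Hr]|Hne2].
      * right; right; left. exists r. split; [split; auto|]. intros s _; auto.
      * right; right; right; left. intros s Hs; apply Hne2; eauto.
Qed.
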